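(* Let $I\subseteq\mathbb{R}_+$ be a nonempty, non-singleton interval, let $n\in\mathbb{N}$, and let $\Phi: I\to\mathbb{R}_+$ be subadditive of order $n$. Then $\sqrt[n]{\Phi}$ is subadditive on $I$, i.e. $\sqrt[n]{\Phi(x+y)}\leq\sqrt[n]{\Phi(x)}+\sqrt[n]{\Phi(y)}$ for all $x,y\in I$ with $x+y\in I$.
   Context: $\mathbb{R}_+$ denotes the set of nonnegative real numbers. For $n\in\mathbb{N}$, a function $\Phi: I\to\mathbb{R}_+$ is called subadditive of order $n$ if for all $x,y\in I$ with $y>0$ and $x+y\in I$ one has $\Phi(x+y)\leq \Phi(x)+\frac{(x+y)^n-x^n}{y^n}\Phi(y)$. *)

(* Defs.v *)
From mathcomp Require Import all_boot all_order all_algebra.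
From mathcomp Require Import all_classical all_reals all_analysis.
Set Implicit Arguments. Unset Strict Implicit. Unset Printing Implicit Defensive.
Import Order.TTheory GRing.Theory Num.Theory.
Local Open Scope ring_scope.

Definition nonneg_interval {R : realType} (I : interval R) : Prop :=
  forall x, x \in I -> 0 <= x.

Definition nontrivial_interval {R : realType} (I : interval R) : Prop :=
  exists x y, [/\ x \in I, y \in I & x < y].

Definition nonneg_on {R : realType} (I : interval R) (Phi : R -> R) : Prop :=
  forall x, x \in I -> 0 <= Phi x.

Definition subadditive_of_order {R : realType} (n : nat) (I : interval R)
    (Phi : R -> R) : Prop :=
  forall x y, x \in I -> y \in I -> 0 < y -> x + y \in I ->
    Phi (x + y) <= Phi x + ((x + y) ^+ n - x ^+ n) / (y ^+ n) * Phi y.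

(* nth root of a nonnegative real: a `^ (1/n) (powR, with 0 `^ r = 0 for r <> 0) *)
Definition nroot {R : realType} (n : nat) (a : R) : R := a `^ (n%:R^-1).

(* Main.v *)
Require Import Defs.
From mathcomp Require Import all_boot all_order all_algebra.
From mathcomp Require Import all_classical all_reals all_analysis.
From mathcomp Require Import ring lra.
Import Order.TTheory GRing.Theory Num.Theory.
Local Open Scope ring_scope.

Lemma nrootX (R : realType) (n : nat) (a : R) : (0 < n)%N -> 0 <= a ->
  (nroot n a) ^+ n = a.
Proof.
move=> n0 a0; rewrite /nroot -powR_mulrn ?powR_ge0 // -powRrM mulVf ?powRr1 //.
by rewrite pnatr_eq0 -lt0n.
Qed.

Lemma gmono (R : realType) (n : nat) (u v b : R) : 0 <= u -> u <= v -> 0 <= b ->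
  0 <= (u + b) ^+ n - u ^+ n /\ (u + b) ^+ n - u ^+ n <= (v + b) ^+ n - v ^+ n.
Proof.
move=> u0 uv b0; have v0 : 0 <= v by apply: le_trans uv.
elim: n => [|n [IH1 IH2]]; first by rewrite !expr0 subrr.
have E : forall w : R, (w + b) ^+ n.+1 - w ^+ n.+1 = w * ((w + b) ^+ n - w ^+ n) + b * (w + b) ^+ n.
  by move=> w; rewrite !exprS; ring.
rewrite !E; split.
  by apply: addr_ge0; [apply: mulr_ge0 | apply: mulr_ge0 => //; apply: exprn_ge0; apply: addr_ge0].
apply: lerD.
  apply: ler_pM => //; exact: le_trans IH2.
apply: ler_wpM2l => //; apply: lerXn2r; rewrite ?inE ?addr_ge0 ?lerD2r //=; rewrite nnegrE addr_ge0 //.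
Qed.

Lemma key (R : realType) (n : nat) (x y a b P : R) : 0 < x -> 0 < y -> 0 <= a -> 0 <= b ->
  b * x <= a * y -> P <= a ^+ n + ((x + y) ^+ n - x ^+ n) / y ^+ n * b ^+ n ->
  P <= (a + b) ^+ n.
Proof.
move=> x0 y0 a0 b0 hab hP; apply: (le_trans hP).
set c := b / y.
have yn0 : y != 0 by rewrite gt_eqF.
have cx : c * x <= a by rewrite /c mulrAC ler_pdivrMr.
have c0 : 0 <= c by rewrite /c divr_ge0 // ltW.
have eq1 : ((x + y) ^+ n - x ^+ n) / y ^+ n * b ^+ n = (c * x + b) ^+ n - (c * x) ^+ n.
  have -> : c * x + b = c * (x + y) by rewrite /c mulrDr mulfVK.
  rewrite !exprMn /c ?exprMn exprVn; field.
  by rewrite expf_neq0.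
rewrite eq1 -lerBrDl.
have [_ h] := @gmono R n _ _ _ (mulr_ge0 c0 (ltW x0)) cx b0; exact: h.
Qed.

Theorem theorem2p3 (R : realType) (I : interval R) (n : nat) (Phi : R -> R) :
  nonneg_interval I -> nontrivial_interval I -> (0 < n)%N ->
  nonneg_on I Phi -> subadditive_of_order n I Phi ->
  forall x y, x \in I -> y \in I -> x + y \in I ->
    nroot n (Phi (x + y)) <= nroot n (Phi x) + nroot n (Phi y).
Proof.
move=> hI _ n0 hPhi hsub x y xI yI xyI.
have x0 := hI x xI; have y0 := hI y yI.
have a0 : 0 <= nroot n (Phi x) by apply: powR_ge0.
have b0 : 0 <= nroot n (Phi y) by apply: powR_ge0.
have c0 : 0 <= nroot n (Phi (x + y)) by apply: powR_ge0.
have [ye|yn0] := eqVneq y 0.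
  rewrite ye.
  by rewrite addr0 lerDl; apply: powR_ge0.
have [xe|xn0] := eqVneq x 0; first by rewrite xe add0r lerDr; apply: powR_ge0.
have xp : 0 < x by rewrite lt_def xn0.
have yp : 0 < y by rewrite lt_def yn0.
rewrite -(ler_pXn2r n0) ?nnegrE ?addr_ge0 //.
rewrite nrootX ?hPhi //.
set a := nroot n (Phi x); set b := nroot n (Phi y).
have ha : Phi x = a ^+ n by rewrite nrootX ?hPhi.
have hb : Phi y = b ^+ n by rewrite nrootX ?hPhi.
have [h|h] := leP (b * x) (a * y).
  apply: (@key R n x y a b (Phi (x + y)) xp yp a0 b0 h); rewrite -ha -hb; exact: hsub.
rewrite [a + b]addrC; apply: (@key R n y x b a (Phi (x + y)) yp xp b0 a0 (ltW h)).
rewrite -ha -hb [x + y]addrC; apply: (hsub y x yI xI xp); rewrite addrC; exact xyI.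
Qed.
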